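(* Let $\mathcal{Y}=\{\mathsf{y}_1,\mathsf{y}_2,\mathsf{y}_3\}\subset\mathbb{R}^2$ be three non-collinear points and let $X_1,\dots,X_n$ be i.i.d. with the uniform distribution on the triangle $T(\mathcal{Y})$. Then for any $r\in[1,\infty]$ the distribution of the relative density $\rho(\mathcal{X}_n;h,N^r_{\mathcal{Y}})$ of the $r$-factor proximity catch digraph does not depend on $\mathcal{Y}$ (hence not on the geometry of $T(\mathcal{Y})$).
   Context: $T(\mathcal{Y})$ denotes the closed triangle (including interior) with vertices $\mathsf{y}_1,\mathsf{y}_2,\mathsf{y}_3$. Vertex regions: joining the center of mass of $T(\mathcal{Y})$ to the midpoints of its three edges partitions $T(\mathcal{Y})$ into regions $R(\mathsf{y}_1),R(\mathsf{y}_2),R(\mathsf{y}_3)$, with $R(\mathsf{y}_j)$ the one containing $\mathsf{y}_j$. $r$-factor proximity map: for $r\in[1,\infty)$ and $x\in T(\mathcal{Y})\setminus\mathcal{Y}$, let $v(x)$ be the vertex with $x\in R(v(x))$ (ties on region boundaries broken arbitrarily), $e(x)$ the edge opposite $v(x)$, $\ell(x)$ the line through $x$ parallel to $e(x)$, and $\ell_r(x)$ the line parallel to $e(x)$, on the same side of $v(x)$ as $x$, with $d(v(x),\ell_r(x))=r\,d(v(x),\ell(x))$. Let $T_r(x)$ be the triangle similar to and with the same orientation as $T(\mathcal{Y})$ having $v(x)$ as a vertex and $\ell_r(x)$ as the line of the opposite edge; set $N^r_{\mathcal{Y}}(x)=T_r(x)\cap T(\mathcal{Y})$. Also $N^\infty_{\mathcal{Y}}(x)=T(\mathcal{Y})$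 for $x\in T(\mathcal{Y})\setminus\mathcal{Y}$, and $N^r_{\mathcal{Y}}(x)=\{x\}$ for $x\in\mathcal{Y}$. Proximity catch digraph: vertex set $\{X_1,\dots,X_n\}$, with an arc $(X_i,X_j)$, $i\neq j$, iff $X_j\in N^r_{\mathcal{Y}}(X_i)$. Its relative density is $\rho(\mathcal{X}_n;h,N^r_{\mathcal{Y}})=|\mathcal{A}|/(n(n-1))$, where $|\mathcal{A}|$ is the number of arcs; equivalently $\frac{1}{n(n-1)}\sum_{i<j}h_{ij}$ with $h_{ij}=\mathbf{I}\{X_j\in N^r_{\mathcal{Y}}(X_i)\}+\mathbf{I}\{X_i\in N^r_{\mathcal{Y}}(X_j)\}$. *)

(* Defs.v *)
From HB Require Import structures.
From mathcomp Require Import all_boot all_order all_algebra.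
From mathcomp Require Import all_classical all_reals all_analysis.
Set Implicit Arguments. Unset Strict Implicit. Unset Printing Implicit Defensive.
Import Order.TTheory GRing.Theory Num.Theory.
Local Open Scope classical_set_scope.
Local Open Scope ring_scope.

(* Points of R^2 are pairs (R * R); R * R carries the product (Borel)
   sigma-algebra and the planar Lebesgue measure is the product measure. *)

Section Geometry.
Variable R : realType.
Local Notation pt := (R * R)%type.

Definition padd (p q : pt) : pt := (p.1 + q.1, p.2 + q.2).
Definition psub (p q : pt) : pt := (p.1 - q.1, p.2 - q.2).
Definition pscale (a : R) (p : pt) : pt := (a * p.1, a * p.2).
Definition det2 (u v : pt) : R := u.1 * v.2 - u.2 * v.1.

Definition noncollinear (y1 y2 y3 : pt) : Prop :=
  det2 (psub y2 y1) (psub y3 y1) != 0.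

Definition triangle (y1 y2 y3 : pt) : set pt :=
  [set x | exists a b c : R, [/\ 0 <= a, 0 <= b, 0 <= c, a + b + c = 1 &
      x = padd (pscale a y1) (padd (pscale b y2) (pscale c y3))]].

Definition conv4 (p1 p2 p3 p4 : pt) : set pt :=
  [set x | exists a b c e : R, [/\ [/\ 0 <= a, 0 <= b, 0 <= c & 0 <= e],
      a + b + c + e = 1 &
      x = padd (pscale a p1) (padd (pscale b p2) (padd (pscale c p3) (pscale e p4)))]].

Definition midpt (p q : pt) : pt := pscale (2^-1) (padd p q).
Definition centroid (y1 y2 y3 : pt) : pt := pscale (3^-1) (padd y1 (padd y2 y3)).

Definition vregion (y1 y2 y3 : pt) : set pt :=
  conv4 y1 (midpt y1 y2) (centroid y1 y2 y3) (midpt y1 y3).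

(* (v(x), w1, w2) where v(x) is the vertex whose region contains x and
   e(x) = [w1, w2] is the opposite edge; ties on region boundaries are broken
   by taking the region of smallest index. *)
Definition vsel (y1 y2 y3 x : pt) : pt * pt * pt :=
  if `[< vregion y1 y2 y3 x >] then (y1, y2, y3)
  else if `[< vregion y2 y3 y1 x >] then (y2, y3, y1)
  else (y3, y1, y2).

Definition dist_line (p q u : pt) : R :=
  `|det2 (psub p q) u| / Num.sqrt (u.1 ^+ 2 + u.2 ^+ 2).

(* T_r(x): the triangle similar to T(Y), with the same orientation, having
   v(x) as a vertex and l_r(x) as the line of its opposite edge.  It is the
   image of T(Y) under the homothety of center v(x) and ratio
   d(v(x), l_r(x)) / d(v(x), e(x)) where d(v(x), l_r(x)) = r d(v(x), l(x)),
   l(x) being the line through x parallel to e(x). *)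
Definition Tr (r : R) (y1 y2 y3 x : pt) : set pt :=
  let: (v, w1, w2) := vsel y1 y2 y3 x in
  let u := psub w2 w1 in
  let s := (r * dist_line v x u) / dist_line v w1 u in
  [set padd v (pscale s (psub z v)) | z in triangle y1 y2 y3].

Definition Nprox (r : \bar R) (y1 y2 y3 x : pt) : set pt :=
  if `[< x = y1 \/ x = y2 \/ x = y3 >] then [set x]
  else match r with
       | +oo%E => triangle y1 y2 y3
       | (r0%:E)%E => Tr r0 y1 y2 y3 x `&` triangle y1 y2 y3
       | -oo%E => set0
       end.

Definition rel_density (r : \bar R) (y1 y2 y3 : pt) (n : nat)
    (Xs : 'I_n -> pt) : R :=
  (\sum_(i < n) \sum_(j < n | j != i) \1_(Nprox r y1 y2 y3 (Xs i)) (Xs j))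
  / (n * n.-1)%:R.

End Geometry.

Section Prob.
Context (R : realType) (d : measure_display) (Omega : measurableType d).
Local Notation pt := (R * R)%type.

Definition area : set pt -> \bar R :=
  ((@lebesgue_measure R) \x (@lebesgue_measure R))%E.

Definition uniform_on_triangle (P : probability Omega R) (Z : Omega -> pt)
    (y1 y2 y3 : pt) : Prop :=
  forall A : set pt, measurable A ->
    P (Z @^-1` A) = (area (A `&` triangle y1 y2 y3) / area (triangle y1 y2 y3))%E.

Definition mutually_independent (n : nat) (P : probability Omega R)
    (X : 'I_n -> Omega -> pt) : Prop :=
  forall A : 'I_n -> set pt, (forall i, measurable (A i)) ->
    P (\bigcap_(i in [set: 'I_n]) (X i @^-1` A i)) =
    (\prod_(i < n) P (X i @^-1` A i))%E.

End Prob.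

(* Main.v *)
Require Import Defs.
From HB Require Import structures.
From mathcomp Require Import all_boot all_order all_algebra.
From mathcomp Require Import all_classical all_reals all_analysis.
From mathcomp Require Import lra ring measurable_realfun.
Import Order.TTheory GRing.Theory Num.Theory.
Local Open Scope classical_set_scope.
Local Open Scope ring_scope.

Set Implicit Arguments. Unset Strict Implicit. Unset Printing Implicit Defensive.

Section Bary.
Variable R : realType.
Local Notation pt := (R * R)%type.
Implicit Types a b c p q x w : pt.

Lemma pt_eq (p q : pt) : p.1 = q.1 -> p.2 = q.2 -> p = q.
Proof. by case: p q => ? ? [? ?] /= -> ->. Qed.

Definition lam a b c p : R := det2 (psub b p) (psub c p) / det2 (psub b a) (psub c a).

Definition nc a b c := det2 (psub b a) (psub c a) != 0.

Lemma det_cyc a b c : det2 (psub c b) (psub a b) = det2 (psub b a) (psub c a).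
Proof. rewrite /det2 /psub /=; ring. Qed.

Lemma nc_cyc a b c : noncollinear a b c -> noncollinear b c a.
Proof. by rewrite /noncollinear => h; rewrite det_cyc. Qed.

Lemma lam_sum a b c p : noncollinear a b c ->
  lam a b c p + lam b c a p + lam c a b p = 1.
Proof.
move=> h; have h2 := nc_cyc h; have h3 := nc_cyc h2.
move: h h2 h3; rewrite /noncollinear /lam /det2 /psub /=.
case: a b c p => [a1 a2] [b1 b2] [c1 c2] [p1 p2] /= h h2 h3.
by field.
Qed.

Lemma lam_repr1 a b c p : noncollinear a b c ->
  p.1 = lam a b c p * a.1 + lam b c a p * b.1 + lam c a b p * c.1.
Proof.
move=> h; have h2 := nc_cyc h; have h3 := nc_cyc h2.
move: h h2 h3; rewrite /noncollinear /lam /det2 /psub /=.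
case: a b c p => [a1 a2] [b1 b2] [c1 c2] [p1 p2] /= h h2 h3.
by field.
Qed.

Lemma lam_repr2 a b c p : noncollinear a b c ->
  p.2 = lam a b c p * a.2 + lam b c a p * b.2 + lam c a b p * c.2.
Proof.
move=> h; have h2 := nc_cyc h; have h3 := nc_cyc h2.
move: h h2 h3; rewrite /noncollinear /lam /det2 /psub /=.
case: a b c p => [a1 a2] [b1 b2] [c1 c2] [p1 p2] /= h h2 h3.
by field.
Qed.

Lemma lam_comb a b c p (al be ga : R) : noncollinear a b c ->
  al + be + ga = 1 ->
  p.1 = al * a.1 + be * b.1 + ga * c.1 ->
  p.2 = al * a.2 + be * b.2 + ga * c.2 -> lam a b c p = al.
Proof.
rewrite /noncollinear /lam /det2 /psub /=.
case: a b c p => [a1 a2] [b1 b2] [c1 c2] [p1 p2] /= h hs -> ->.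
have -> : ga = 1 - al - be by lra.
by field.
Qed.


Lemma lam_all a b c p (al be ga : R) : noncollinear a b c ->
  al + be + ga = 1 ->
  p.1 = al * a.1 + be * b.1 + ga * c.1 ->
  p.2 = al * a.2 + be * b.2 + ga * c.2 ->
  [/\ lam a b c p = al, lam b c a p = be & lam c a b p = ga].
Proof.
move=> h hs h1 h2; have h' := nc_cyc h; have h'' := nc_cyc h'.
split; first exact: lam_comb h hs h1 h2.
  apply: (lam_comb (be := ga) (ga := al) h').
  - by rewrite -hs; ring.
  - by rewrite h1; ring.
  - by rewrite h2; ring.
apply: (lam_comb (be := al) (ga := be) h'').
- by rewrite -hs; ring.
- by rewrite h1; ring.
- by rewrite h2; ring.
Qed.

Lemma comb_eq a b c p : noncollinear a b c ->
  p = padd (pscale (lam a b c p) a) (padd (pscale (lam b c a p) b)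
        (pscale (lam c a b p) c)).
Proof.
move=> h; apply: pt_eq => /=.
  by rewrite [LHS](lam_repr1 _ h) addrA.
by rewrite [LHS](lam_repr2 _ h) addrA.
Qed.

Lemma tri_char a b c p : noncollinear a b c ->
  triangle a b c p <->
  [/\ 0 <= lam a b c p, 0 <= lam b c a p & 0 <= lam c a b p].
Proof.
move=> h; split.
  case=> al [be [ga [h1 h2 h3 hs ->]]].
  have [-> -> ->] : [/\ lam a b c (padd (pscale al a) (padd (pscale be b)
     (pscale ga c))) = al, lam b c a (padd (pscale al a) (padd (pscale be b)
     (pscale ga c))) = be & lam c a b (padd (pscale al a) (padd (pscale be b)
     (pscale ga c))) = ga].
    by apply: lam_all => //=; rewrite addrA.
  by [].
case=> h1 h2 h3; exists (lam a b c p), (lam b c a p), (lam c a b p).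
split => //; first exact: lam_sum.
exact: comb_eq.
Qed.


Lemma vreg_char a b c x : noncollinear a b c ->
  vregion a b c x <->
  [/\ lam b c a x <= lam a b c x, lam c a b x <= lam a b c x,
      0 <= lam b c a x & 0 <= lam c a b x].
Proof.
move=> h; split.
  case=> al [be [ga [de [[h1 h2 h3 h4] hs hx]]]].
  have [-> -> ->] : [/\ lam a b c x = al + be / 2 + ga / 3 + de / 2,
     lam b c a x = be / 2 + ga / 3 & lam c a b x = ga / 3 + de / 2].
    apply: lam_all => //.
    - by lra.
    - by rewrite hx /= /midpt /centroid /pscale /padd /=; field.
    - by rewrite hx /= /midpt /centroid /pscale /padd /=; field.
  split; lra.
have hs := lam_sum x h.
have e1 := lam_repr1 x h; have e2 := lam_repr2 x h.
move: hs e1 e2; move: (lam a b c x) (lam b c a x) (lam c a b x) => la lb lc.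
case: x => x1 x2 /= hs e1 e2 [h1 h2 h3 h4].
case: (boolP (lc <= lb)) => [hbc|]; last rewrite -ltNge => hcb.
  exists (la - lb), (2 * (lb - lc)), (3 * lc), 0; split.
  - split; lra.
  - lra.
  - apply: pt_eq; rewrite /= /midpt /centroid /pscale /padd /= ?e1 ?e2; by field.
exists (la - lc), 0, (3 * lb), (2 * (lc - lb)); split.
- split; lra.
- lra.
- apply: pt_eq; rewrite /= /midpt /centroid /pscale /padd /= ?e1 ?e2; by field.
Qed.

End Bary.

Section T.
Variable R : realType.
Local Notation pt := (R * R)%type.
Implicit Types a b c p q x w : pt.

Lemma hom_char a b c (s : R) w : noncollinear a b c -> 0 <= s ->
  [set padd a (pscale s (psub z a)) | z in triangle a b c] w <->
  [/\ 0 <= lam b c a w, 0 <= lam c a b w & 1 <= lam a b c w + s].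
Proof.
move=> h s0; split.
  case=> z /(tri_char _ h) [z1 z2 z3] <-.
  have hs := lam_sum z h.
  have e1 := lam_repr1 z h; have e2 := lam_repr2 z h.
  move: hs e1 e2 z1 z2 z3; move: (lam a b c z) (lam b c a z) (lam c a b z).
  move=> la lb lc hs e1 e2 z1 z2 z3.
  have [-> -> ->] : [/\ lam a b c (padd a (pscale s (psub z a))) = 1 - s + s * la,
    lam b c a (padd a (pscale s (psub z a))) = s * lb &
    lam c a b (padd a (pscale s (psub z a))) = s * lc].
    apply: lam_all => //.
    - by have := congr1 (fun t => s * t) hs; rewrite /= mulr1 !mulrDr; lra.
    - by rewrite /padd /pscale /psub /= e1; ring.
    - by rewrite /padd /pscale /psub /= e2; ring.
  split; [exact: mulr_ge0|exact: mulr_ge0|nra].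
have hs := lam_sum w h.
have e1 := lam_repr1 w h; have e2 := lam_repr2 w h.
move: hs e1 e2; move: (lam a b c w) (lam b c a w) (lam c a b w) => la lb lc.
case: w => w1 w2 /= hs e1 e2 [h1 h2 h3].
have [s0'|sp] : s = 0 \/ 0 < s.
  by move: s0; rewrite le0r => /orP[/eqP->|->]; [left|right].
  subst s.
  have lb0 : lb = 0 by lra.
  have lc0 : lc = 0 by lra.
  exists a.
    apply/(tri_char _ h).
    have [-> -> ->] : [/\ lam a b c a = 1, lam b c a a = 0 & lam c a b a = 0].
      by apply: lam_all => //; [lra|ring|ring].
    by rewrite ler01 lexx.
  apply: pt_eq; rewrite /padd /pscale /psub /= ?e1 ?e2 lb0 lc0 (_ : la = 1); try ring; lra.
exists (padd a (pscale s^-1 (psub (w1, w2) a))).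
  apply/(tri_char _ h).
  set p := padd a (pscale s^-1 (psub (w1, w2) a)).
  have [-> -> ->] : [/\ lam a b c p = 1 - (1 - la) / s, lam b c a p = lb / s &
     lam c a b p = lc / s].
    apply: lam_all => //.
    - have -> : lc = 1 - la - lb by lra.
      by field; rewrite gt_eqF.
    - by rewrite /p /padd /pscale /psub /= e1; field; rewrite gt_eqF.
    - by rewrite /p /padd /pscale /psub /= e2; field; rewrite gt_eqF.
  split.
    - rewrite subr_ge0 ler_pdivrMr //; lra.
    - exact: divr_ge0 h1 (ltW sp).
    - exact: divr_ge0 h2 (ltW sp).
by apply: pt_eq; rewrite /padd /pscale /psub /=; field; rewrite gt_eqF.
Qed.

Lemma s_eq (r : R) a b c x : noncollinear a b c ->
  (r * dist_line a x (psub c b)) / dist_line a b (psub c b) =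
  r * `|1 - lam a b c x|.
Proof.
move=> h.
have hD : det2 (psub a b) (psub c b) != 0.
  have -> : det2 (psub a b) (psub c b) = - det2 (psub b a) (psub c a).
    by rewrite /det2 /psub /=; ring.
  by rewrite oppr_eq0.
have hu : (psub c b).1 ^+ 2 + (psub c b).2 ^+ 2 != 0.
  apply: contra hD => /eqP H.
  have h1 : (psub c b).1 = 0.
    apply/eqP; rewrite -sqrf_eq0; apply/eqP.
    by apply: le_anti; rewrite sqr_ge0 -H lerDl sqr_ge0.
  have h2 : (psub c b).2 = 0.
    apply/eqP; rewrite -sqrf_eq0; apply/eqP.
    by apply: le_anti; rewrite sqr_ge0 -H lerDr sqr_ge0.
  by rewrite /det2 h1 h2 !mulr0 subr0.
have hS : Num.sqrt ((psub c b).1 ^+ 2 + (psub c b).2 ^+ 2) != 0.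
  by rewrite sqrtr_eq0 -ltNge lt0r hu addr_ge0 ?sqr_ge0.
rewrite /dist_line.
set S := Num.sqrt _.
have -> : (r * (`|det2 (psub a x) (psub c b)| / S)) / (`|det2 (psub a b) (psub c b)| / S)
  = r * (`|det2 (psub a x) (psub c b)| / `|det2 (psub a b) (psub c b)|).
  by field; rewrite normr_eq0 hD hS.
congr (_ * _); rewrite -normf_div; congr (`| _ |).
clear S hu hS; move: hD h; rewrite /lam /noncollinear /det2 /psub /=.
case: a b c x => [a1 a2] [b1 b2] [c1 c2] [x1 x2] /= hD h.
by field; rewrite hD h.
Qed.

End T.

Section T.
Variable R : realType.
Local Notation pt := (R * R)%type.
Implicit Types a b c p q x w : pt.

Lemma tri_cyc a b c : noncollinear a b c -> triangle a b c = triangle b c a.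
Proof.
move=> h; have h' := nc_cyc h.
apply/funext => p; apply/propext; rewrite (tri_char _ h) (tri_char _ h').
by split=> -[? ? ?].
Qed.

Definition vertb (p1 p2 p3 : R) : bool :=
  [|| [&& p1 == 1, p2 == 0 & p3 == 0], [&& p1 == 0, p2 == 1 & p3 == 0]
    | [&& p1 == 0, p2 == 0 & p3 == 1]].
Definition trib (q1 q2 q3 : R) := [&& 0 <= q1, 0 <= q2 & 0 <= q3].
Definition vr1 (p1 p2 p3 : R) := [&& p2 <= p1, p3 <= p1, 0 <= p2 & 0 <= p3].
Definition trq (r0 p1 p2 p3 q1 q2 q3 : R) : bool :=
  if vr1 p1 p2 p3 then [&& 0 <= q2, 0 <= q3 & 1 <= q1 + r0 * `|1 - p1|]
  else if vr1 p2 p3 p1 then [&& 0 <= q3, 0 <= q1 & 1 <= q2 + r0 * `|1 - p2|]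
  else [&& 0 <= q1, 0 <= q2 & 1 <= q3 + r0 * `|1 - p3|].
Definition Qb (r : \bar R) (p1 p2 p3 q1 q2 q3 : R) : bool :=
  if vertb p1 p2 p3 then [&& q1 == p1, q2 == p2 & q3 == p3]
  else match r with
   | +oo%E => trib q1 q2 q3
   | (r0%:E)%E => trq r0 p1 p2 p3 q1 q2 q3 && trib q1 q2 q3
   | -oo%E => false end.

Lemma lam_vert a b c : noncollinear a b c ->
  [/\ lam a b c a = 1, lam b c a a = 0 & lam c a b a = 0].
Proof. by move=> h; apply: lam_all => //; [lra|ring|ring]. Qed.

Lemma vert_char y1 y2 y3 x : noncollinear y1 y2 y3 ->
  (x = y1 \/ x = y2 \/ x = y3) <->
  vertb (lam y1 y2 y3 x) (lam y2 y3 y1 x) (lam y3 y1 y2 x).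
Proof.
move=> h; have h' := nc_cyc h; have h'' := nc_cyc h'.
split.
  case=> [->|[->|->]]; rewrite /vertb.
  - by have [-> -> ->] := lam_vert h; rewrite !eqxx.
  - by have [-> -> ->] := lam_vert h'; rewrite !eqxx orbT.
  - by have [-> -> ->] := lam_vert h''; rewrite !eqxx !orbT.
move: (comb_eq x h); rewrite /vertb.
move: (lam y1 y2 y3 x) (lam y2 y3 y1 x) (lam y3 y1 y2 x) => p1 p2 p3 ->.
case/or3P => /and3P[/eqP-> /eqP-> /eqP->]; [left|right;left|right;right];
  apply: pt_eq => /=; ring.
Qed.

Lemma eq_char y1 y2 y3 x w : noncollinear y1 y2 y3 ->
  (w = x) <-> [&& lam y1 y2 y3 w == lam y1 y2 y3 x,
     lam y2 y3 y1 w == lam y2 y3 y1 x & lam y3 y1 y2 w == lam y3 y1 y2 x].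
Proof.
move=> h; split; first by move=> ->; rewrite !eqxx.
case/and3P => /eqP e1 /eqP e2 /eqP e3.
by rewrite (comb_eq w h) (comb_eq x h) e1 e2 e3.
Qed.

Lemma Nprox_char (r : \bar R) y1 y2 y3 x w : noncollinear y1 y2 y3 ->
  (1 <= r)%E ->
  Nprox r y1 y2 y3 x w <->
  Qb r (lam y1 y2 y3 x) (lam y2 y3 y1 x) (lam y3 y1 y2 x)
       (lam y1 y2 y3 w) (lam y2 y3 y1 w) (lam y3 y1 y2 w).
Proof.
move=> h hr; have h' := nc_cyc h; have h'' := nc_cyc h'.
rewrite /Nprox /Qb.
case: asboolP => hv.
  by move/(vert_char _ h): hv => ->; rewrite -(eq_char _ _ h).
move/(vert_char _ h)/negP/negbTE: (hv) => ->.
case: r hr => [r0| |] //= hr.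
  have r00 : 0 <= r0 by move: hr; rewrite lee_fin; lra.
  have hT : forall p, triangle y1 y2 y3 p <->
      trib (lam y1 y2 y3 p) (lam y2 y3 y1 p) (lam y3 y1 y2 p).
    move=> p; rewrite (tri_char _ h) /trib; split.
      by case=> -> -> ->.
    by case/and3P.
  have hT2 : forall p, triangle y2 y3 y1 p <->
      trib (lam y1 y2 y3 p) (lam y2 y3 y1 p) (lam y3 y1 y2 p).
    by move=> p; rewrite -(tri_cyc h).
  have hT3 : forall p, triangle y3 y1 y2 p <->
      trib (lam y1 y2 y3 p) (lam y2 y3 y1 p) (lam y3 y1 y2 p).
    by move=> p; rewrite -(tri_cyc h') -(tri_cyc h).
  rewrite /Tr /vsel /trq /vr1.
  case: asboolP => hr1.
    move/(vreg_char _ h): (hr1) => [-> -> -> ->] /=.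
    rewrite (s_eq r0 x h).
    split.
      case=> /(hom_char _ h (mulr_ge0 r00 (normr_ge0 _))) [-> -> ->] /hT ->.
      by [].
    case/andP => /and3P [? ? ?] /hT ?; split => //.
    by apply/(hom_char _ h (mulr_ge0 r00 (normr_ge0 _))).
  have -> : [&& lam y2 y3 y1 x <= lam y1 y2 y3 x, lam y3 y1 y2 x <= lam y1 y2 y3 x,
     0 <= lam y2 y3 y1 x & 0 <= lam y3 y1 y2 x] = false.
    apply/negbTE/negP => /and4P [? ? ? ?]; apply: hr1.
    by apply/(vreg_char _ h).
  case: asboolP => hr2.
    move/(vreg_char _ h'): (hr2) => [-> -> -> ->] /=.
    rewrite (s_eq r0 x h') (tri_cyc h).
    split.
      case=> /(hom_char _ h' (mulr_ge0 r00 (normr_ge0 _))) [-> -> ->].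
      by move=> /hT2 ->.
    case/andP => /and3P [? ? ?] /hT2 ?; split => //.
    by apply/(hom_char _ h' (mulr_ge0 r00 (normr_ge0 _))).
  have -> : [&& lam y3 y1 y2 x <= lam y2 y3 y1 x, lam y1 y2 y3 x <= lam y2 y3 y1 x,
     0 <= lam y3 y1 y2 x & 0 <= lam y1 y2 y3 x] = false.
    apply/negbTE/negP => /and4P [? ? ? ?]; apply: hr2.
    by apply/(vreg_char _ h').
  rewrite /= (s_eq r0 x h'') (tri_cyc h) (tri_cyc h').
  split.
    case=> /(hom_char _ h'' (mulr_ge0 r00 (normr_ge0 _))) [-> -> ->].
    by move=> /hT3 ->.
  case/andP => /and3P [? ? ?] /hT3 ?.
  split => //.
  by apply/(hom_char _ h'' (mulr_ge0 r00 (normr_ge0 _))).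
rewrite (tri_char _ h) /trib; split.
  by case=> -> -> ->.
by case/and3P.
Qed.

End T.

Section T.
Variable R : realType.
Local Notation pt := (R * R)%type.
Implicit Types a b c p q x w : pt.

Definition affm (y1 y2 y3 z1 z2 z3 p : pt) : pt :=
  padd (pscale (lam y1 y2 y3 p) z1)
    (padd (pscale (lam y2 y3 y1 p) z2) (pscale (lam y3 y1 y2 p) z3)).

Lemma affm_lam y1 y2 y3 z1 z2 z3 p :
  noncollinear y1 y2 y3 -> noncollinear z1 z2 z3 ->
  [/\ lam z1 z2 z3 (affm y1 y2 y3 z1 z2 z3 p) = lam y1 y2 y3 p,
      lam z2 z3 z1 (affm y1 y2 y3 z1 z2 z3 p) = lam y2 y3 y1 p &
      lam z3 z1 z2 (affm y1 y2 y3 z1 z2 z3 p) = lam y3 y1 y2 p].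
Proof.
move=> hy hz; apply: lam_all => //; first exact: lam_sum.
  by rewrite /= addrA.
by rewrite /= addrA.
Qed.

Lemma affmK y1 y2 y3 z1 z2 z3 p :
  noncollinear y1 y2 y3 -> noncollinear z1 z2 z3 ->
  affm z1 z2 z3 y1 y2 y3 (affm y1 y2 y3 z1 z2 z3 p) = p.
Proof.
move=> hy hz; have [e1 e2 e3] := affm_lam p hy hz.
by rewrite /affm e1 e2 e3 -comb_eq.
Qed.

Lemma indic_iff (T1 T2 : Type) (A : set T1) (B : set T2) (u : T1) (v : T2) :
  (A u <-> B v) -> (\1_A u : R) = \1_B v.
Proof.
move=> H; rewrite /indic (_ : (u \in A) = (v \in B)) //.
by apply/idP/idP; rewrite !in_setE => /H.
Qed.

Lemma rel_density_affm (r : \bar R) y1 y2 y3 z1 z2 z3 n (xs : 'I_n -> pt) :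
  noncollinear y1 y2 y3 -> noncollinear z1 z2 z3 -> (1 <= r)%E ->
  rel_density r z1 z2 z3 (fun i => affm y1 y2 y3 z1 z2 z3 (xs i)) =
  rel_density r y1 y2 y3 xs.
Proof.
move=> hy hz hr; rewrite /rel_density; congr (_ / _).
apply: eq_bigr => i _; apply: eq_bigr => j _.
apply: indic_iff.
rewrite (Nprox_char _ _ hz hr) (Nprox_char _ _ hy hr).
have [-> -> ->] := affm_lam (xs i) hy hz.
by have [-> -> ->] := affm_lam (xs j) hy hz.
Qed.

End T.

Section B.
Variables (R : realType) (n : nat).
Local Notation pt := (R * R)%type.
Implicit Types a b c p q x w : pt.

Definition fpt := 'I_n -> pt.
HB.instance Definition _ := gen_eqMixin fpt.
HB.instance Definition _ := gen_choiceMixin fpt.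
HB.instance Definition _ := isPointed.Build fpt (fun _ => (0, 0)).

Definition rects : set (set fpt) :=
  [set S | exists A : 'I_n -> set pt, (forall i, measurable (A i)) /\
     S = [set xs | forall i, A i (xs i)]].

Local Notation FT := (g_sigma_algebraType rects).

Lemma mproj i : measurable_fun [set: FT] (fun xs : FT => xs i).
Proof.
move=> _ A mA; rewrite setTI; apply: sub_sigma_algebra.
exists (fun j => if j == i then A else setT); split.
  by move=> j; case: eqP.
apply/seteqP; split => xs /=.
  by move=> Ax j; case: eqP => // ->.
by move/(_ i); rewrite eqxx.
Qed.

Lemma mlam a b c : measurable_fun [set: pt] (lam a b c).
Proof.
rewrite /lam /det2 /psub /=.
apply: measurable_funM; last exact: measurable_cst.
apply: measurable_funB; apply: measurable_funM.
- by apply: measurable_funB; [exact: measurable_cst|exact: measurable_fst].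
- by apply: measurable_funB; [exact: measurable_cst|exact: measurable_snd].
- by apply: measurable_funB; [exact: measurable_cst|exact: measurable_snd].
- by apply: measurable_funB; [exact: measurable_cst|exact: measurable_fst].
Qed.


Lemma mlamx a b c i : measurable_fun [set: FT] (fun xs : FT => lam a b c (xs i)).
Proof. exact: measurableT_comp (mlam a b c) (mproj i). Qed.

Ltac mtac := repeat first
  [ exact: measurable_cst | exact: mlamx
  | apply: measurable_fun_ifT | apply: measurable_and | apply: measurable_or
  | apply: measurable_neg | apply: measurable_fun_ler | apply: measurable_fun_eqr
  | apply: measurableT_comp; [exact: normr_measurable|]
  | apply: measurable_funD | apply: measurable_funB | apply: measurable_funM
  | apply: measurable_funN ].

Lemma mQb (r : \bar R) y1 y2 y3 i j :
  measurable_fun [set: FT] (fun xs : FT =>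
    Qb r (lam y1 y2 y3 (xs i)) (lam y2 y3 y1 (xs i)) (lam y3 y1 y2 (xs i))
         (lam y1 y2 y3 (xs j)) (lam y2 y3 y1 (xs j)) (lam y3 y1 y2 (xs j))).
Proof. case: r => [r0||]; rewrite /Qb /vertb /trib /trq /vr1; mtac. Qed.

Lemma indic_bool (T : Type) (A : set T) u (b : bool) : (A u <-> b) -> (\1_A u : R) = b%:R.
Proof.
move=> H; rewrite indicE (_ : (u \in A) = b) //.
apply/idP/idP => [|hb]; first by rewrite in_setE => /H.
by rewrite in_setE; apply/H.
Qed.

Lemma mbool_R (f : FT -> bool) : measurable_fun setT f ->
  measurable_fun [set: FT] (fun t => (f t)%:R : R).
Proof.
move=> mf.
have -> : (fun t => (f t)%:R : R) = \1_(f @^-1` [set true]).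
  apply/funext => t; rewrite (@indic_bool _ _ _ (f t)) //.
apply: measurable_indic; rewrite -[X in measurable X]setTI; exact: mf.
Qed.

Lemma mrel (r : \bar R) y1 y2 y3 : noncollinear y1 y2 y3 -> (1 <= r)%E ->
  measurable_fun [set: FT] (fun xs : FT => rel_density r y1 y2 y3 xs).
Proof.
move=> h hr.
have -> : (fun xs : FT => rel_density r y1 y2 y3 xs) = (fun xs : FT =>
   (\sum_(i < n) \sum_(j < n) (if j != i then
    (Qb r (lam y1 y2 y3 (xs i)) (lam y2 y3 y1 (xs i)) (lam y3 y1 y2 (xs i))
         (lam y1 y2 y3 (xs j)) (lam y2 y3 y1 (xs j)) (lam y3 y1 y2 (xs j)))%:R
     else 0)) * ((n * n.-1)%:R)^-1).
  apply/funext => xs; rewrite /rel_density; congr (_ / _).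
  apply: eq_bigr => i _; rewrite big_mkcond /=; apply: eq_bigr => j _.
  case: ifP => // _; apply: indic_bool.
  exact: (Nprox_char _ _ h hr).
apply: measurable_funM; last exact: measurable_cst.
apply: measurable_sum => i; apply: measurable_sum => j.
apply: measurable_fun_ifT; [exact: measurable_cst| |exact: measurable_cst].
by apply: mbool_R; exact: mQb.
Qed.

End B.

Section OneD.
Variable R : realType.
Variables (c t : R).

Definition aff1 (y : R) : R := c * y + t.

Lemma maff : measurable_fun [set: measurableTypeR R] aff1.
Proof.
apply: measurable_funD; last exact: measurable_cst.
apply: measurable_funM; [exact: measurable_cst|exact: measurable_id].
Qed.

Definition lsc (S : set (measurableTypeR R)) : \bar R :=
  ((`|c|)%:E * lebesgue_measure (aff1 @^-1` S))%E.

Let lsc0 : lsc set0 = 0%E.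
Proof. by rewrite /lsc preimage_set0 measure0 mule0. Qed.

Let lsc_ge0 S : (0 <= lsc S)%E.
Proof. by rewrite /lsc mule_ge0 // lee_fin. Qed.

Let lsc_sigma_additive : semi_sigma_additive lsc.
Proof.
move=> F mF tF mUF; rewrite /lsc.
rewrite [X in X @ \oo --> _](_ : _ = (fun n => ((`|c|)%:E *
    \sum_(0 <= i < n) lebesgue_measure (aff1 @^-1` F i))%E)); last first.
  by apply/funext => k; rewrite ge0_sume_distrr.
apply: cvgeZl => //; rewrite preimage_bigcup.
apply: measure_semi_sigma_additive.
- by move=> n; rewrite -[X in measurable X]setTI; apply: maff => //; exact: mF.
- move=> i j _ _ [y [h1 h2]]; apply: (tF i j I I).
  by exists (aff1 y).
- by rewrite -preimage_bigcup -[X in measurable X]setTI; apply: maff => //; exact: mUF.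
Qed.

HB.instance Definition _ := isMeasure.Build _ _ _ lsc lsc0 lsc_ge0 lsc_sigma_additive.


Lemma leb_aff (S : set (measurableTypeR R)) : c != 0 -> measurable S ->
  lebesgue_measure (aff1 @^-1` S) = (((`|c|)^-1)%:E * lebesgue_measure S)%E.
Proof.
move=> c0 mS.
have E : forall A, measurable A -> lebesgue_measure A = lsc A.
  apply: lebesgue_measure_unique => _ [[a b] _ <-] /=.
  rewrite /lsc lebesgue_measure_itv /=.
  have [cp|cn] := ltP 0 c.
    rewrite (_ : aff1 @^-1` _ = `](a - t) / c, (b - t) / c]%classic); last first.
      apply/seteqP; split => y /=; rewrite !in_itv /= /aff1.
        by case/andP => h1 h2; rewrite ltr_pdivrMr // ler_pdivlMr //; apply/andP; split; lra.
      by rewrite ltr_pdivrMr // ler_pdivlMr // => /andP [h1 h2]; apply/andP; split; lra.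
    rewrite lebesgue_measure_itv /= !lte_fin ltr_pM2r ?invr_gt0 //.
    rewrite ltrBlDr subrK.
    case: ifP => _; last by rewrite mule0.
    by rewrite -EFinB -EFinM gtr0_norm //; congr (_%:E); field; rewrite gt_eqF.
  have cn' : c < 0 by rewrite lt_neqAle c0 cn.
  rewrite (_ : aff1 @^-1` _ = `[(b - t) / c, (a - t) / c[%classic); last first.
    apply/seteqP; split => y /=; rewrite !in_itv /= /aff1.
      by case/andP => h1 h2; rewrite ler_ndivrMr // ltr_ndivlMr //; apply/andP; split; lra.
    by rewrite ler_ndivrMr // ltr_ndivlMr // => /andP [h1 h2]; apply/andP; split; lra.
  rewrite lebesgue_measure_itv /= !lte_fin ltr_nM2r ?invr_lt0 //.
  rewrite ltrBlDr subrK.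
  case: ifP => _; last by rewrite mule0.
  by rewrite -EFinB -EFinM ltr0_norm //; congr (_%:E); field; rewrite lt_eqF.
by rewrite [in RHS]E // /lsc muleA -EFinM mulVf ?normr_eq0 // mul1e.
Qed.
End OneD.

Section TwoD.
Variable R : realType.
Local Notation pt := (R * R)%type.

Lemma area2 (E : set pt) : measurable E ->
  area E = ((@lebesgue_measure R) \x^ (@lebesgue_measure R))%E E.
Proof.
move=> mE; rewrite /area; apply: product_measure_unique => // A B mA mB.
exact: product_measure2E.
Qed.

Definition L1m (c k t : R) (p : pt) : pt := (p.1, c * p.2 + (k * p.1 + t)).
Definition L2m (c k t : R) (p : pt) : pt := (c * p.1 + (k * p.2 + t), p.2).

Lemma mL1 c k t : measurable_fun [set: pt] (L1m c k t).
Proof.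
apply: measurable_fun_pair; first exact: measurable_fst.
apply: measurable_funD.
  by apply: measurable_funM; [exact: measurable_cst|exact: measurable_snd].
apply: measurable_funD; last exact: measurable_cst.
by apply: measurable_funM; [exact: measurable_cst|exact: measurable_fst].
Qed.

Lemma mL2 c k t : measurable_fun [set: pt] (L2m c k t).
Proof.
apply: measurable_fun_pair; last exact: measurable_snd.
apply: measurable_funD.
  by apply: measurable_funM; [exact: measurable_cst|exact: measurable_fst].
apply: measurable_funD; last exact: measurable_cst.
by apply: measurable_funM; [exact: measurable_cst|exact: measurable_snd].
Qed.

Lemma area_L1 c k t (E : set pt) : c != 0 -> measurable E ->
  area (L1m c k t @^-1` E) = (((`|c|)^-1)%:E * area E)%E.
Proof.
move=> c0 mE; rewrite /area /product_measure1.
rewrite -ge0_integralZl_EFin //; last first.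
  exact: measurable_fun_xsection.
apply: eq_integral => x _ /=.
rewrite -(@leb_aff _ c (k * x + t)) //; last exact: measurable_xsection.
Qed.

Lemma area_L2 c k t (E : set pt) : c != 0 -> measurable E ->
  area (L2m c k t @^-1` E) = (((`|c|)^-1)%:E * area E)%E.
Proof.
move=> c0 mE.
have mE' : measurable (L2m c k t @^-1` E).
  by rewrite -[X in measurable X]setTI; apply: mL2.
rewrite !area2 // /product_measure2.
rewrite -ge0_integralZl_EFin //; last first.
  exact: measurable_fun_ysection.
apply: eq_integral => y _ /=.
rewrite -(@leb_aff _ c (k * y + t)) //; last exact: measurable_ysection.
Qed.

End TwoD.

Section Three.
Variable R : realType.
Local Notation pt := (R * R)%type.

Definition Lgen (a b c d e f : R) (p : pt) : pt :=
  (a * p.1 + b * p.2 + e, c * p.1 + d * p.2 + f).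

Lemma mLgen a b c d e f : measurable_fun [set: pt] (Lgen a b c d e f).
Proof.
apply: measurable_fun_pair; (apply: measurable_funD; last exact: measurable_cst);
  (apply: measurable_funD;
  [ by apply: measurable_funM; [exact: measurable_cst|exact: measurable_fst]
  | by apply: measurable_funM; [exact: measurable_cst|exact: measurable_snd]]).
Qed.

Lemma area_gen_a a b c d e f (E : set pt) : a != 0 -> a * d - b * c != 0 ->
  measurable E ->
  area (Lgen a b c d e f @^-1` E) = (((`|a * d - b * c|)^-1)%:E * area E)%E.
Proof.
move=> a0 D0 mE.
have -> : Lgen a b c d e f = L1m ((a * d - b * c) / a) (c / a) (f - c * e / a)
    \o L2m a b e.
  apply/funext => p; apply: pt_eq; rewrite /L1m /L2m /Lgen /=; first by ring.
  by field.
rewrite comp_preimage area_L2 //; last first.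
  by rewrite -[X in measurable X]setTI; apply: mL1.
rewrite area_L1 //; last by rewrite mulf_neq0 // invr_eq0.
rewrite muleA -EFinM; congr (_ * _)%E; congr (_%:E).
rewrite normf_div; field.
by rewrite !normr_eq0 a0 D0.
Qed.

Lemma area_gen a b c d e f (E : set pt) : a * d - b * c != 0 ->
  measurable E ->
  area (Lgen a b c d e f @^-1` E) = (((`|a * d - b * c|)^-1)%:E * area E)%E.
Proof.
move=> D0 mE.
have [a0|a0] := eqVneq a 0; last exact: area_gen_a.
have b0 : b != 0 by apply: contra D0 => /eqP ->; rewrite a0 !mul0r subrr.
have -> : Lgen a b c d e f = Lgen (a - b) b (c - d) d e f \o L1m 1 1 0.
  by apply/funext => p; apply: pt_eq; rewrite /L1m /Lgen /=; ring.
rewrite comp_preimage area_L1 ?oner_eq0 //; last first.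
  by rewrite -[X in measurable X]setTI; apply: mLgen.
rewrite area_gen_a //.
- by rewrite normr1 invr1 mul1e; congr (_ * _)%E; congr (_%:E); congr (`| _ |^-1); ring.
- by rewrite a0 sub0r oppr_eq0.
- by rewrite (_ : _ - _ = a * d - b * c) //; ring.
Qed.

Lemma inj_det a b c d e f : injective (Lgen a b c d e f) -> a * d - b * c != 0.
Proof.
move=> inj; apply/negP => /eqP D0.
have key : forall u v : R, a * u + b * v = 0 -> c * u + d * v = 0 -> u = 0 /\ v = 0.
  move=> u v h1 h2.
  have := inj (u, v) (0, 0); rewrite /Lgen /= h1 h2 !mulr0 !addr0 => /(_ erefl).
  by case.
have h1 : a * b + b * - a = 0 by ring.
have h2 : c * b + d * - a = 0.
  have -> : c * b + d * - a = - (a * d - b * c) by ring.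
  by rewrite D0 oppr0.
have [k1 k2] := key b (- a) h1 h2.
have h3 : a * d + b * - c = 0.
  have -> : a * d + b * - c = a * d - b * c by ring.
  by rewrite D0.
have h4 : c * d + d * - c = 0 by ring.
have [k3 k4] := key d (- c) h3 h4.
move/eqP: k2; rewrite oppr_eq0 => /eqP k2.
move/eqP: k4; rewrite oppr_eq0 => /eqP k4.
have h5 : a * 1 + b * 0 = 0 by rewrite k1 k2; ring.
have h6 : c * 1 + d * 0 = 0 by rewrite k3 k4; ring.
by have [/eqP] := key 1 0 h5 h6; rewrite oner_eq0.
Qed.

End Three.

Section EE.
Variable R : realType.
Local Notation pt := (R * R)%type.

Definition lc0 (a b c : pt) := (b.1 * c.2 - b.2 * c.1) / det2 (psub b a) (psub c a).
Definition lc1 (a b c : pt) := (b.2 - c.2) / det2 (psub b a) (psub c a).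
Definition lc2 (a b c : pt) := (c.1 - b.1) / det2 (psub b a) (psub c a).

Lemma lam_lin (a b c p : pt) : lam a b c p = lc0 a b c + lc1 a b c * p.1 + lc2 a b c * p.2.
Proof. by rewrite /lam /lc0 /lc1 /lc2 /det2 /psub /=; ring. Qed.

Lemma affm_gen (y1 y2 y3 z1 z2 z3 : pt) :
  affm y1 y2 y3 z1 z2 z3 = Lgen
    (lc1 y1 y2 y3 * z1.1 + lc1 y2 y3 y1 * z2.1 + lc1 y3 y1 y2 * z3.1)
    (lc2 y1 y2 y3 * z1.1 + lc2 y2 y3 y1 * z2.1 + lc2 y3 y1 y2 * z3.1)
    (lc1 y1 y2 y3 * z1.2 + lc1 y2 y3 y1 * z2.2 + lc1 y3 y1 y2 * z3.2)
    (lc2 y1 y2 y3 * z1.2 + lc2 y2 y3 y1 * z2.2 + lc2 y3 y1 y2 * z3.2)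
    (lc0 y1 y2 y3 * z1.1 + lc0 y2 y3 y1 * z2.1 + lc0 y3 y1 y2 * z3.1)
    (lc0 y1 y2 y3 * z1.2 + lc0 y2 y3 y1 * z2.2 + lc0 y3 y1 y2 * z3.2).
Proof.
apply/funext => p; rewrite /affm !lam_lin.
by apply: pt_eq; rewrite /padd /pscale /Lgen /=; ring.
Qed.

Lemma maffm (y1 y2 y3 z1 z2 z3 : pt) :
  measurable_fun [set: pt] (affm y1 y2 y3 z1 z2 z3).
Proof. by rewrite affm_gen; exact: mLgen. Qed.

Lemma area_affm (y1 y2 y3 z1 z2 z3 : pt) :
  noncollinear y1 y2 y3 -> noncollinear z1 z2 z3 ->
  exists k : R, 0 < k /\ forall E : set pt, measurable E ->
    area (affm y1 y2 y3 z1 z2 z3 @^-1` E) = (k%:E * area E)%E.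
Proof.
move=> hy hz.
have inj : injective (affm y1 y2 y3 z1 z2 z3) := can_inj (fun p => affmK p hy hz).
rewrite affm_gen in inj *.
have D0 := inj_det inj.
eexists; split; last by move=> E mE; rewrite area_gen.
by rewrite invr_gt0 normr_gt0.
Qed.

Lemma ratio_scale (k : R) (x y : \bar R) : 0 < k -> (0 <= x)%E -> (0 <= y)%E ->
  ((k%:E * x) / (k%:E * y) = x / y)%E.
Proof.
move=> k0; case: x => [s||]; case: y => [r||] => //= hs hr.
- have {hs}hs : 0 <= s by rewrite -lee_fin.
  have {hr}hr : 0 <= r by rewrite -lee_fin.
  rewrite -!EFinM !inver mulf_eq0 (gt_eqF k0) /=.
  have [r0|r0] := eqVneq r 0.
    subst r.
    have [s0|s0] := eqVneq s 0; first by subst s; rewrite !mulr0 !mul0e.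
    by rewrite !gt0_muley // lte_fin ?mulr_gt0 // lt_neqAle eq_sym s0 hs.
  rewrite -!EFinM; congr (_%:E).
  by field; rewrite r0 gt_eqF.
- by rewrite gt0_muley ?lte_fin // invey !mule0.
- have {hr}hr : 0 <= r by rewrite -lee_fin.
  rewrite -EFinM gt0_muley ?lte_fin // !inver mulf_eq0 (gt_eqF k0) /=.
  have [r0|r0] := eqVneq r 0; first by subst r.
  by rewrite !gt0_mulye // lte_fin ?invr_gt0 ?mulr_gt0 // lt_neqAle eq_sym r0 hr.
- by rewrite gt0_muley ?lte_fin.
Qed.

End EE.

Section Law.
Variables (R : realType) (n : nat).
Local Notation pt := (R * R)%type.
Local Notation FT := (g_sigma_algebraType (@rects R n)).

Context d (Omega : measurableType d) (P : probability Omega R)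
  (X : 'I_n -> Omega -> pt).

Definition Xv (w : Omega) : FT := fun i => X i w.

Lemma mXv : (forall i, measurable_fun setT (X i)) -> measurable_fun [set: Omega] Xv.
Proof.
move=> hXm; apply: measurability; first reflexivity.
move=> _ [_ [A [mA ->]] <-].
rewrite setTI (_ : Xv @^-1` _ = \bigcap_(i in [set: 'I_n]) (X i @^-1` A i)).
  apply: fin_bigcap_measurable; first exact: finite_finset.
  by move=> i _; rewrite -[X in measurable X]setTI; apply: hXm.
by apply/seteqP; split => w /=; [move=> h i _; exact: h|move=> h i; exact: h i I].
Qed.

Definition law (hX : forall i, measurable_fun setT (X i)) (S : set FT) : \bar R :=
  P (Xv @^-1` S).

Section inst.
Variable hX : forall i, measurable_fun setT (X i).

Let law0 : law hX set0 = 0%E.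
Proof. by rewrite /law preimage_set0 measure0. Qed.

Let law_ge0 S : (0 <= law hX S)%E.
Proof. exact: measure_ge0. Qed.

Let law_sigma_additive : semi_sigma_additive (law hX).
Proof.
move=> F mF tF mUF; rewrite /law preimage_bigcup.
apply: measure_semi_sigma_additive.
- by move=> k; rewrite -[X in measurable X]setTI; apply: (mXv hX).
- move=> i j _ _ [y [h1 h2]]; apply: (tF i j I I).
  by exists (Xv y).
- by rewrite -preimage_bigcup -[X in measurable X]setTI; apply: (mXv hX).
Qed.

HB.instance Definition _ := isMeasure.Build _ _ _ (law hX)
  law0 law_ge0 law_sigma_additive.
End inst.

End Law.

Section G.
Variable R : realType.
Local Notation pt := (R * R)%type.

Lemma mtri (y1 y2 y3 : pt) : noncollinear y1 y2 y3 -> measurable (triangle y1 y2 y3).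
Proof.
move=> h.
have -> : triangle y1 y2 y3 = (fun p => trib (lam y1 y2 y3 p) (lam y2 y3 y1 p)
    (lam y3 y1 y2 p)) @^-1` [set true].
  apply/funext => p; apply/propext; rewrite (tri_char _ h) /trib /preimage /=.
  by split; [case=> -> -> ->|case/and3P].
have mb : measurable_fun [set: pt] (fun p => trib (lam y1 y2 y3 p) (lam y2 y3 y1 p)
    (lam y3 y1 y2 p)).
  by rewrite /trib; repeat apply: measurable_and;
    apply: measurable_fun_ler; (exact: measurable_cst || exact: mlam).
rewrite -[X in measurable X]setTI; apply: mb => //.
Qed.

Lemma tri_affm (y1 y2 y3 z1 z2 z3 p : pt) :
  noncollinear y1 y2 y3 -> noncollinear z1 z2 z3 ->
  triangle z1 z2 z3 (affm y1 y2 y3 z1 z2 z3 p) <-> triangle y1 y2 y3 p.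
Proof.
move=> hy hz; rewrite (tri_char _ hz) (tri_char _ hy).
by have [-> -> ->] := affm_lam p hy hz.
Qed.

Lemma unif_affm d (Omega : measurableType d) (P : probability Omega R)
  (Z : Omega -> pt) (y1 y2 y3 z1 z2 z3 : pt) :
  noncollinear y1 y2 y3 -> noncollinear z1 z2 z3 ->
  uniform_on_triangle P Z z1 z2 z3 ->
  uniform_on_triangle P (fun w => affm z1 z2 z3 y1 y2 y3 (Z w)) y1 y2 y3.
Proof.
move=> hy hz hu A mA.
have maf := maffm z1 z2 z3 y1 y2 y3.
have mpre : forall E, measurable E -> measurable (affm z1 z2 z3 y1 y2 y3 @^-1` E).
  by move=> E mE; rewrite -[X in measurable X]setTI; apply: maf.
rewrite (_ : (fun w => _) @^-1` A = Z @^-1` (affm z1 z2 z3 y1 y2 y3 @^-1` A)) //.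
rewrite hu; last exact: mpre.
have [k [k0 hk]] := area_affm hz hy.
rewrite (_ : _ `&` _ = affm z1 z2 z3 y1 y2 y3 @^-1` (A `&` triangle y1 y2 y3)); last first.
  apply/seteqP; split => p /=.
    by case=> h1 /(tri_affm p hz hy) h2.
  by case=> h1 h2; split => //; apply/(tri_affm p hz hy).
rewrite (_ : triangle z1 z2 z3 = affm z1 z2 z3 y1 y2 y3 @^-1` triangle y1 y2 y3); last first.
  by apply/funext => p; apply/propext; rewrite /preimage /= (tri_affm p hz hy).
have mAT : measurable (A `&` triangle y1 y2 y3) by apply: measurableI => //; exact: mtri.
rewrite (hk _ mAT) (hk _ (mtri hy)).
by rewrite ratio_scale // measure_ge0.
Qed.

End G.

Section H.
Variable R : realType.
Local Notation pt := (R * R)%type.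

Lemma law_rect n d (Omega : measurableType d) (P : probability Omega R)
  (X : 'I_n -> Omega -> pt) (hX : forall i, measurable_fun setT (X i))
  (y1 y2 y3 : pt) (A : 'I_n -> set pt) :
  mutually_independent P X ->
  (forall i, uniform_on_triangle P (X i) y1 y2 y3) ->
  (forall i, measurable (A i)) ->
  law P hX [set xs | forall i, A i (xs i)] =
  (\prod_(i < n) (area (A i `&` triangle y1 y2 y3) / area (triangle y1 y2 y3)))%E.
Proof.
move=> hi hu mA; rewrite /law.
rewrite (_ : Xv X @^-1` _ = \bigcap_(i in [set: 'I_n]) (X i @^-1` A i)); last first.
  by apply/seteqP; split => w /=; [move=> h i _; exact: h|move=> h i; exact: h i I].
rewrite hi //; apply: eq_bigr => i _; exact: hu.
Qed.

End H.

Unset Implicit Arguments. Set Strict Implicit.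

Theorem theorem1 (R : realType) (r : \bar R) (hr : (1 <= r)%E) (n : nat)
  (y1 y2 y3 : R * R) (hY : noncollinear y1 y2 y3)
  (z1 z2 z3 : R * R) (hZ : noncollinear z1 z2 z3)
  (d : measure_display) (Omega : measurableType d) (P : probability Omega R)
  (X : 'I_n -> Omega -> R * R)
  (hXm : forall i, measurable_fun setT (X i))
  (hXi : mutually_independent P X)
  (hXu : forall i, uniform_on_triangle P (X i) y1 y2 y3)
  (d' : measure_display) (Omega' : measurableType d') (P' : probability Omega' R)
  (X' : 'I_n -> Omega' -> R * R)
  (hX'm : forall i, measurable_fun setT (X' i))
  (hX'i : mutually_independent P' X')
  (hX'u : forall i, uniform_on_triangle P' (X' i) z1 z2 z3) :
  forall B : set R, measurable B ->
    P ((fun w => rel_density r y1 y2 y3 (fun i => X i w)) @^-1` B) =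
    P' ((fun w => rel_density r z1 z2 z3 (fun i => X' i w)) @^-1` B).
Proof.
move=> B mB.
pose Y := fun i w => affm z1 z2 z3 y1 y2 y3 (X' i w).
have hYm : forall i, measurable_fun setT (Y i).
  by move=> i; apply: measurableT_comp; [exact: maffm|exact: hX'm].
have hYu : forall i, uniform_on_triangle P' (Y i) y1 y2 y3.
  by move=> i; apply: unif_affm.
have hYi : mutually_independent P' Y.
  move=> A mA; apply: (hX'i (fun i => affm z1 z2 z3 y1 y2 y3 @^-1` A i)).
  by move=> i; rewrite -[X in measurable X]setTI; apply: maffm.
have -> : (fun w => rel_density r z1 z2 z3 (fun i => X' i w)) =
    (fun w => rel_density r y1 y2 y3 (fun i => Y i w)).
  apply/funext => w; rewrite -(rel_density_affm (fun i => Y i w) hY hZ hr).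
  congr (rel_density _ _ _ _ _); apply/funext => i.
  by rewrite /Y affmK.
pose rel := fun xs : g_sigma_algebraType (@rects R n) => rel_density r y1 y2 y3 xs.
have mrelB : measurable (rel @^-1` B).
  by rewrite -[X in measurable X]setTI; apply: (mrel hY hr).
change (law P hXm (rel @^-1` B) = law P' hYm (rel @^-1` B)).
pose m1 : {measure set (g_sigma_algebraType (@rects R n)) -> \bar R} := law P hXm.
pose m2 : {measure set (g_sigma_algebraType (@rects R n)) -> \bar R} := law P' hYm.
change (m1 (rel @^-1` B) = m2 (rel @^-1` B)).
have mG : @measurable _ (g_sigma_algebraType (@rects R n)) = <<s @rects R n >> by [].
apply: (@measure_unique _ R (g_sigma_algebraType (@rects R n)) (@rects R n) (fun _ => setT) mG _ _ _ m1 m2) => //.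
- move=> _ _ [A [mA ->]] [C [mC ->]].
  exists (fun i => A i `&` C i); split; first by move=> i; exact: measurableI.
  apply/seteqP; split => xs /=.
    by case=> h1 h2 i; split; [exact: h1|exact: h2].
  by move=> h; split => i; have [] := h i.
- move=> _; exists (fun _ => setT); split => //.
  by apply/seteqP; split => xs.
- by apply/seteqP; split => // xs _; exists 0%N.
- move=> _ [A [mA ->]].
  exact: (etrans (law_rect hXm hXi hXu mA) (esym (law_rect hYm hYi hYu mA))).
- by move=> _; rewrite /m1 /= /law (_ : _ @^-1` _ = [set: Omega]) ?probability_setT ?ltry.
Qed.
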